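(* Let $M$ be a proper metric space and $X_1,\dots,X_n$ a coarsely transverse collection of half spaces in $M$. For $\sigma\in S_n$ put $A_0^\sigma=X_{\sigma_1}\cdots X_{\sigma_n}$ and $A_i^\sigma=X_{\sigma_i}^cX_{\sigma_{i+1}}\cdots X_{\sigma_n}$ ($i=1,\dots,n$), and $A_i=A_i^{\mathrm{id}}$. Then for every $\sigma\in S_n$, $$[A_0^\sigma\wedge\dots\wedge A_n^\sigma]=\mathrm{sgn}(\sigma)\,[A_0\wedge\dots\wedge A_n]\in HX^n(M).$$
   Context: Borel sets are identified with their indicator functions. For $Y\subseteq M$, $Y_R=\{x:d(x,Y)\le R\}$. Borel sets $X_1,\dots,X_n$ form a coarsely transverse collection of half spaces if $\bigcap_i (X_i)_R\cap(X_i^c)_R$ is bounded for all $R\ge0$. Coarse cohomology: equip $M^{n+1}$ with the max metric, $\Delta_R$ the $R$-thickening of the multi-diagonal. $CX^n(M)$ consists of locally bounded Borel functions $\theta:M^{n+1}\to\mathbb{C}$ with $\mathrm{supp}(\theta)\cap\Delta_R$ bounded for all $R>0$, with differential $\delta\theta=\sum_{i=0}^{n+1}(-1)^i\pi_i^*\theta$ ($\pi_i$ omits the $i$-th coordinate); $HX^n(M)$ is its cohomology. For bounded Borel $f_j$, $f_0\wedge\dots\wedge f_n=\sum_{\tau\in S_{n+1}}\mathrm{sgn}(\tau)f_{\tau_0}\otimes\dots\otimes f_{\tau_n}$. Each $A^\sigma_0\wedge\dots\wedge A^\sigma_n$ is a coarse cocycle. *)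

(* Defs.v *)
From HB Require Import structures.
From mathcomp Require Import all_boot all_order all_algebra all_fingroup.
From mathcomp Require Import all_classical all_reals.
From mathcomp Require Import measure.
From mathcomp Require Import complex.
Set Implicit Arguments. Unset Strict Implicit. Unset Printing Implicit Defensive.
Import Order.TTheory GRing.Theory Num.Theory.
Local Open Scope classical_set_scope.
Local Open Scope ring_scope.

Section CoarseDefs.
Variable R : realType.
Variable M : Type.

Definition is_metric (d : M -> M -> R) : Prop :=
  [/\ (forall x y, 0 <= d x y),
      (forall x y, d x y = 0 <-> x = y),
      (forall x y, d x y = d y x) &
      (forall x y z, d x z <= d x y + d y z)].

Definition oball (d : M -> M -> R) (x : M) (r : R) : set M := [set y | d x y < r].
Definition cball (d : M -> M -> R) (x : M) (r : R) : set M := [set y | d x y <= r].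

Definition mopen (d : M -> M -> R) (U : set M) : Prop :=
  forall x, U x -> exists2 r : R, 0 < r & oball d x r `<=` U.

Definition mborel (d : M -> M -> R) (A : set M) : Prop :=
  smallest (sigma_algebra setT) (mopen d) A.

Definition mcompact (d : M -> M -> R) (K : set M) : Prop :=
  forall (I : Type) (U : I -> set M), (forall i, mopen d (U i)) ->
    K `<=` \bigcup_i U i ->
    exists2 F : set I, finite_set F & K `<=` \bigcup_(i in F) U i.

Definition proper_metric (d : M -> M -> R) : Prop :=
  is_metric d /\ forall x r, mcompact d (cball d x r).

Definition mbounded (d : M -> M -> R) (A : set M) : Prop :=
  exists r : R, forall x y, A x -> A y -> d x y <= r.

(** Y_r = {x : d(x,Y) <= r}, where d(x,Y) = inf_{y in Y} d(x,y). *)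
Definition thick (d : M -> M -> R) (Y : set M) (r : R) : set M :=
  [set x | forall e : R, 0 < e -> exists2 y, Y y & d x y < r + e].

End CoarseDefs.

Definition dmax (R : realType) (M : Type) (k : nat) (d : M -> M -> R)
  (x y : 'I_k -> M) : R := \big[Num.max/0]_(i < k) d (x i) (y i).

Definition diag (M : Type) (k : nat) : set ('I_k -> M) :=
  [set x | exists m : M, forall i, x i = m].

Definition Delta (R : realType) (M : Type) (k : nat) (d : M -> M -> R) (r : R)
  : set ('I_k -> M) := thick (dmax d) (@diag M k) r.

Definition dC (R : realType) (z w : R[i]) : R :=
  let: Complex a b := (z - w)%R in Num.sqrt (a ^+ 2 + b ^+ 2).

Definition borel_fun (R : realType) (T : Type) (dT : T -> T -> R) (f : T -> R[i]) : Prop :=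
  forall U : set R[i], mopen (@dC R) U -> mborel dT (f @^-1` U).

Definition locally_bounded (R : realType) (T : Type) (dT : T -> T -> R) (f : T -> R[i]) : Prop :=
  forall x, exists2 r : R, 0 < r & exists C : R, forall y, oball dT x r y -> dC (f y) 0 <= C.

Definition fsupp (R : realType) (T : Type) (f : T -> R[i]) : set T := [set x | f x != 0].

Definition CX (R : realType) (M : Type) (d : M -> M -> R) (k : nat)
  (theta : ('I_k.+1 -> M) -> R[i]) : Prop :=
  [/\ borel_fun (dmax d) theta,
      locally_bounded (dmax d) theta &
      forall r : R, 0 < r -> mbounded (dmax d) (fsupp theta `&` Delta d r)].

Definition proj_omit (M : Type) (k : nat) (i : 'I_k.+2) (x : 'I_k.+2 -> M) : 'I_k.+1 -> M :=
  fun j => x (lift i j).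

Definition cobound (R : realType) (M : Type) (k : nat) (theta : ('I_k.+1 -> M) -> R[i])
  (x : 'I_k.+2 -> M) : R[i] :=
  \sum_(i < k.+2) (-1) ^+ i * theta (proj_omit i x).

(** f is a coboundary in degree k: f = delta eta for some eta in CX^{k-1}
    (in degree 0, since CX^{-1} = 0, this means f = 0). *)
Definition is_coboundary (R : realType) (M : Type) (d : M -> M -> R) (k : nat) :
  (('I_k.+1 -> M) -> R[i]) -> Prop :=
  match k as k0 return ((('I_k0.+1 -> M) -> R[i]) -> Prop) with
  | 0 => fun f => f = (fun _ => 0)
  | k'.+1 => fun f => exists2 eta, CX d eta & f = cobound eta
  end.

Definition indic (R : realType) (M : Type) (A : set M) (x : M) : R[i] :=
  if `[< A x >] then 1 else 0.
Arguments indic {R M} A x.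

Definition wedge (R : realType) (M : Type) (k : nat) (f : 'I_k.+1 -> M -> R[i])
  (x : 'I_k.+1 -> M) : R[i] :=
  \sum_(tau : 'S_k.+1) (-1) ^+ (odd_perm tau) * \prod_(j < k.+1) f (tau j) (x j).

Definition coarsely_transverse (R : realType) (M : Type) (d : M -> M -> R) (n : nat)
  (X : 'I_n -> set M) : Prop :=
  (forall i, mborel d (X i)) /\
  forall r : R, 0 <= r ->
    mbounded d (\bigcap_(i in setT) (thick d (X i) r `&` thick d (~` X i) r)).

(** A^sigma_0 = X_{s1} ... X_{sn};  A^sigma_i = X^c_{s_i} X_{s_{i+1}} ... X_{s_n}
    (0-based: index i+1 corresponds to the complement of X (sigma i)). *)
Definition Aset (M : Type) (n : nat) (X : 'I_n -> set M) (sigma : 'S_n) (i : 'I_n.+1) : set M :=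
  match unlift ord0 i with
  | None => \bigcap_(j in setT) X (sigma j)
  | Some k => ~` X (sigma k) `&` \bigcap_(j in [set j : 'I_n | (k < j)%N]) X (sigma j)
  end.

(* Main.v *)
Require Import Defs.
From HB Require Import structures.
From mathcomp Require Import all_boot all_order all_algebra all_fingroup.
From mathcomp Require Import all_classical all_reals.
From mathcomp Require Import measure.
From mathcomp Require Import complex.
From mathcomp Require Import ring.
Import Order.TTheory GRing.Theory Num.Theory.
Local Open Scope classical_set_scope.
Local Open Scope ring_scope.
Set Implicit Arguments. Unset Strict Implicit. Unset Printing Implicit Defensive.

Section Borel.
Variables (R : realType) (T : Type) (dT : T -> T -> R).

Lemma mb0 : mborel dT set0.
Proof. exact: sigma_algebra0. Qed.

Lemma mbC A : mborel dT A -> mborel dT (~` A).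
Proof. by move=> h; rewrite -setTD; apply: sigma_algebraCD. Qed.

Lemma mbU A B : mborel dT A -> mborel dT B -> mborel dT (A `|` B).
Proof.
move=> hA hB.
have -> : A `|` B = \bigcup_i (fun i : nat => if i == 0%N then A else B) i.
  rewrite predeqE => x; split.
    by case=> h; [exists 0%N | exists 1%N].
  by case=> -[|i] _ /= h; [left|right].
by apply: sigma_algebra_bigcup => -[|i].
Qed.

Lemma mbI A B : mborel dT A -> mborel dT B -> mborel dT (A `&` B).
Proof.
move=> hA hB; rewrite -[A `&` B]setCK setCI; apply: mbC; apply: mbU; exact: mbC.
Qed.

Lemma mbT : mborel dT setT.
Proof. rewrite -setC0; apply: mbC; exact: mb0. Qed.

Lemma mb_seq (I : eqType) (s : seq I) (F : I -> set T) :
  (forall i, mborel dT (F i)) -> mborel dT [set x | exists2 i, i \in s & F i x].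
Proof.
move=> hF; elim: s => [|a s IH].
  suff -> : [set x | exists2 i, i \in [::] & F i x] = set0 by exact: mb0.
  by rewrite predeqE => x; split => // -[].
suff -> : [set x | exists2 i, i \in a :: s & F i x] = F a `|` [set x | exists2 i, i \in s & F i x].
  exact: mbU.
rewrite predeqE => x; split.
  by case=> i; rewrite inE => /orP[/eqP->|iS]; [left|right; exists i].
case=> [h|[i iS h]]; first by exists a; rewrite ?inE ?eqxx.
by exists i; rewrite // inE iS orbT.
Qed.

Lemma mb_seqI (I : eqType) (s : seq I) (F : I -> set T) :
  (forall i, mborel dT (F i)) -> mborel dT [set x | forall i, i \in s -> F i x].
Proof.
move=> hF.
have -> : [set x | forall i, i \in s -> F i x] = ~` [set x | exists2 i, i \in s & (~` F i) x].
  rewrite predeqE => x; split.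
    by move=> h [i /h].
  move=> h i iS; apply: contrapT => nF; apply: h; by exists i.
apply: mbC; apply: mb_seq => i; exact: mbC.
Qed.

End Borel.

Lemma mb_preimage (R : realType) (T1 T2 : Type) (d1 : T1 -> T1 -> R) (d2 : T2 -> T2 -> R)
  (f : T1 -> T2) :
  (forall U, mopen d2 U -> mopen d1 (f @^-1` U)) ->
  forall B, mborel d2 B -> mborel d1 (f @^-1` B).
Proof.
move=> hf B; apply: (@smallest_sub _ _ _ [set B | mborel d1 (f @^-1` B)]).
- split => /=.
  + by rewrite preimage_set0; exact: mb0.
  + by move=> A hA; rewrite setTD preimage_setC; apply: mbC.
  + move=> A hA; rewrite preimage_bigcup; exact: sigma_algebra_bigcup.
- by move=> U hU /=; apply: sub_sigma_algebra; apply: hf.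
Qed.
Section Simple.
Variables (R : realType) (T : Type) (dT : T -> T -> R).

Definition sB (f : T -> R[i]) := exists (I : finType) (E : I -> set T)
  (F : {ffun I -> bool} -> R[i]),
  (forall l, mborel dT (E l)) /\ forall x, f x = F [ffun l => `[< E l x >]].

Lemma dC_ge0 (z : R[i]) : 0 <= dC z 0.
Proof. by rewrite /dC; case: (z - 0) => a b; exact: sqrtr_ge0. Qed.

Lemma sB_borel f : sB f -> borel_fun dT f.
Proof.
move=> [I [E [F [hE hf]]]] U hU.
pose G (v : {ffun I -> bool}) :=
  [set x | U (F v) /\ forall l, l \in enum I -> `[< E l x >] = v l].
have -> : f @^-1` U = [set x | exists2 v, v \in enum {ffun I -> bool} & G v x].
  rewrite predeqE => x; split.
    move=> /= Ux; exists [ffun l => `[< E l x >]]; first by rewrite mem_enum.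
    by split; [rewrite -hf | move=> l _; rewrite ffunE].
  move=> [v _ [Uv hv]] /=; rewrite hf.
  suff -> : [ffun l => `[< E l x >]] = v by [].
  by apply/ffunP => l; rewrite ffunE hv // mem_enum.
apply: mb_seq => v; rewrite /G.
have [Uv|nUv] := pselect (U (F v)); last first.
  suff -> : [set x | U (F v) /\ forall l, l \in enum I -> `[< E l x >] = v l] = set0.
    exact: mb0.
  by rewrite predeqE => x; split => // -[].
suff -> : [set x | U (F v) /\ forall l, l \in enum I -> `[< E l x >] = v l] =
   [set x | forall l, l \in enum I -> (if v l then E l else ~` E l) x].
  apply: mb_seqI => l; by case: (v l); [apply: hE | apply: mbC; apply: hE].
rewrite predeqE => x; split.
  move=> [_ h] l /h <-; case: asboolP => //.
move=> h; split => // l /h; case: (v l) => /=.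
  by move/asboolT.
by move/asboolF.
Qed.

Lemma sB_lb f : sB f -> locally_bounded dT f.
Proof.
move=> [I [E [F [hE hf]]]] x; exists 1 => //.
exists (\sum_(v : {ffun I -> bool}) dC (F v) 0) => y _.
rewrite hf (bigD1 [ffun l => `[< E l y >]]) //= lerDl.
by apply: sumr_ge0 => v _; exact: dC_ge0.
Qed.

Lemma sB_add f g : sB f -> sB g -> sB (fun x => f x + g x).
Proof.
move=> [I1 [E1 [F1 [hE1 hf]]]] [I2 [E2 [F2 [hE2 hg]]]].
exists (I1 + I2)%type.
exists (fun l => match l with inl a => E1 a | inr b => E2 b end).
exists (fun v => F1 [ffun a => v (inl a)] + F2 [ffun b => v (inr b)]).
split; first by case.
move=> x; rewrite hf hg; congr (F1 _ + F2 _); apply/ffunP => a; rewrite !ffunE //.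
Qed.

Lemma sB_scale c f : sB f -> sB (fun x => c * f x).
Proof.
move=> [I [E [F [hE hf]]]]; exists I, E, (fun v => c * F v); split => // x.
by rewrite hf.
Qed.

Lemma sB_of (I : finType) (E : I -> set T) (Phi : (I -> bool) -> R[i]) :
  (forall l, mborel dT (E l)) -> sB (fun x => Phi (fun l => `[< E l x >])).
Proof.
move=> hE; exists I, E, (fun v => Phi (fun l => v l)); split => // x.
by congr Phi; apply: funext => l; rewrite ffunE.
Qed.

End Simple.
Section Metric.
Variables (R : realType) (M : Type) (d : M -> M -> R).
Hypothesis hd : is_metric d.

Lemma d_ge0 x y : 0 <= d x y. Proof. by case: hd. Qed.
Lemma d_sym x y : d x y = d y x. Proof. by case: hd. Qed.
Lemma d_tri x y z : d x z <= d x y + d y z. Proof. by case: hd. Qed.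
Lemma d_refl x : d x x = 0. Proof. by case: hd => _ h _ _; apply/h. Qed.

Lemma dmax_ge k (x y : 'I_k -> M) j : d (x j) (y j) <= dmax d x y.
Proof. rewrite /dmax; exact: (le_bigmax _ (fun i => d (x i) (y i)) j). Qed.

Lemma dmax_le k (x y : 'I_k -> M) c : 0 <= c -> (forall j, d (x j) (y j) <= c) ->
  dmax d x y <= c.
Proof. by move=> c0 h; rewrite /dmax; apply: bigmax_le. Qed.

Lemma mb_proj k (j : 'I_k) (B : set M) : mborel d B ->
  mborel (dmax d) [set x : 'I_k -> M | B (x j)].
Proof.
apply: (@mb_preimage R _ _ (dmax d) d (fun x => x j)).
move=> U hU x /= Uxj; have [r r0 hr] := hU _ Uxj.
exists r => // y; rewrite /oball /= => hy; apply: hr; rewrite /oball /=.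
exact: le_lt_trans (dmax_ge x y j) hy.
Qed.

Variables (n : nat) (X : 'I_n -> set M).
Hypothesis htr : coarsely_transverse d X.

Definition sepX k (x : 'I_k -> M) :=
  exists i, (forall j, X i (x j)) \/ (forall j, ~ X i (x j)).

Definition Good k (f : ('I_k -> M) -> R[i]) :=
  sB (dmax d) f /\ forall x, sepX x -> f x = 0.

Lemma Good_CX k (f : ('I_k.+1 -> M) -> R[i]) : Good f -> CX d f.
Proof.
move=> [hs hv]; split; [exact: sB_borel | exact: sB_lb |].
move=> r r0.
pose S := \bigcap_(i in setT) (thick d (X i) (r + 1) `&` thick d (~` X i) (r + 1)).
have [K hK] : mbounded d S by case: htr => _; apply; rewrite addr_ge0 // ltW.
have key : forall x, (fsupp f `&` Delta d r) x ->
    exists m, S m /\ forall j, d (x j) m <= r + 1.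
  move=> x [/= fx Dx].
  have [y /= [m ym] hxy] := Dx 1 ltr01.
  have hm : forall j, d (x j) m <= r + 1.
    by move=> j; rewrite -(ym j) ltW // (le_lt_trans (dmax_ge x y j)).
  exists m; split => //.
  apply: contrapT => nS.
  have [i _ ni] : exists2 i, setT i & ~ (thick d (X i) (r + 1) `&` thick d (~` X i) (r + 1)) m.
    apply: contrapT => h; apply: nS => i _; apply: contrapT => h'; apply: h; by exists i.
  have sx : sepX x.
    exists i.
    have [t1|t1] := pselect (thick d (X i) (r + 1) m); last first.
      right => j Xj; apply: t1 => e e0; exists (x j) => //.
      by rewrite d_sym; apply: le_lt_trans (hm j) _; rewrite ltrDl.
    have [t2|t2] := pselect (thick d (~` X i) (r + 1) m); first by case: ni.
    left => j; apply: contrapT => Xj; apply: t2 => e e0; exists (x j) => //.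
    by rewrite d_sym; apply: le_lt_trans (hm j) _; rewrite ltrDl.
  by move: fx; rewrite /fsupp /= hv // eqxx.
exists ((r + 1) + K + (r + 1)) => x y hx hy.
have [m [Sm hm]] := key _ hx; have [m' [Sm' hm']] := key _ hy.
apply: dmax_le.
  have K0 := le_trans (d_ge0 m m) (hK _ _ Sm Sm).
  have r1 : 0 <= r + 1 by rewrite addr_ge0 // ltW.
  by rewrite addr_ge0 // addr_ge0.
move=> j; apply: (le_trans (d_tri _ m _)); rewrite -addrA lerD //.
apply: (le_trans (d_tri _ m' _)); rewrite lerD // ?hK //.
by rewrite d_sym.
Qed.

Lemma Good0 k : Good (fun _ : 'I_k -> M => 0).
Proof.
split => //; exists 'I_0, (fun _ => set0), (fun _ => 0); split => //.
move=> _; exact: mb0.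
Qed.

Lemma GoodD k (f g : ('I_k -> M) -> R[i]) : Good f -> Good g -> Good (fun x => f x + g x).
Proof.
move=> [hf vf] [hg vg]; split; first exact: sB_add.
by move=> x s; rewrite vf // vg // addr0.
Qed.

Lemma GoodZ k c (f : ('I_k -> M) -> R[i]) : Good f -> Good (fun x => c * f x).
Proof.
move=> [hf vf]; split; first exact: sB_scale.
by move=> x s; rewrite vf // mulr0.
Qed.

End Metric.
Section Wedge.
Variables (R : realType) (M : Type).
Local Notation C := (R[i]).

Definition Wg K (f : 'I_K -> M -> C) (x : 'I_K -> M) : C :=
  \det (\matrix_(i, j) f i (x j)).

Lemma wedge_Wg k (f : 'I_k.+1 -> M -> C) x : wedge f x = Wg f x.
Proof.
rewrite /Wg -det_tr /wedge /determinant; apply: eq_bigr => s _.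
congr (_ * _); apply: eq_bigr => j _; by rewrite !mxE.
Qed.

Lemma Wg_lin K (f g h : 'I_K -> M -> C) i0 a b x :
  (forall i, i != i0 -> g i = f i /\ h i = f i) ->
  (forall y, f i0 y = a * g i0 y + b * h i0 y) ->
  Wg f x = a * Wg g x + b * Wg h x.
Proof.
move=> hgh hf; apply: (determinant_multilinear (i0 := i0)).
- by apply/rowP => j; rewrite !mxE hf.
- apply/matrixP => i j; rewrite !mxE.
  have /hgh[-> _] // : lift i0 i != i0 by rewrite eq_sym neq_lift.
- apply/matrixP => i j; rewrite !mxE.
  have /hgh[_ ->] // : lift i0 i != i0 by rewrite eq_sym neq_lift.
Qed.

Lemma Wg_alt K (f : 'I_K -> M -> C) i1 i2 x :
  i1 != i2 -> (forall j, f i1 (x j) = f i2 (x j)) -> Wg f x = 0.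
Proof.
move=> ne h; apply: (determinant_alternate ne) => j; by rewrite !mxE h.
Qed.

Lemma Wg_zero K (f : 'I_K -> M -> C) i0 x :
  (forall j, f i0 (x j) = 0) -> Wg f x = 0.
Proof.
move=> h.
pose g := fun i => if i == i0 then (fun _ : M => 0 : C) else f i.
have -> : Wg f x = Wg g x.
  rewrite /Wg; congr (\det _); apply/matrixP => i j; rewrite !mxE /g.
  by case: eqP => // ->; rewrite h.
rewrite (@Wg_lin K g g g i0 0 0 x); first by rewrite !mul0r addr0.
  by [].
by move=> y; rewrite /g eqxx mul0r addr0.
Qed.

Definition rset K (f : 'I_K -> M -> C) i0 (h : M -> C) :=
  fun i => if i == i0 then h else f i.

Lemma Wg_addrow K (f : 'I_K -> M -> C) i0 i1 c x :
  i0 != i1 ->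
  Wg (rset f i0 (fun y => f i0 y + c * f i1 y)) x = Wg f x.
Proof.
move=> ne.
rewrite (@Wg_lin K _ f (rset f i0 (f i1)) i0 1 c x).
- rewrite mul1r (@Wg_alt K (rset f i0 (f i1)) i0 i1) ?mulr0 ?addr0 // => j.
  by rewrite /rset eqxx eq_sym (negbTE ne).
- by move=> i /negbTE hi; rewrite /rset hi.
- by move=> y; rewrite /rset eqxx mul1r.
Qed.

Lemma Wg_ext K (f g : 'I_K -> M -> C) x :
  (forall i j, f i (x j) = g i (x j)) -> Wg f x = Wg g x.
Proof.
by move=> h; rewrite /Wg; congr (\det _); apply/matrixP => i j; rewrite !mxE h.
Qed.

(* expansion along the last row, which is constantly 1 *)
Lemma Wg_last N' (G : 'I_N'.+1 -> M -> C) (x : 'I_N'.+2 -> M) :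
  Wg (fun i : 'I_N'.+2 => if unlift ord_max i is Some i' then G i' else (fun _ => 1)) x
  = (-1) ^+ N'.+1 * cobound (Wg G) x.
Proof.
rewrite /Wg (expand_det_row _ ord_max) /cobound mulr_sumr.
apply: eq_bigr => j _.
rewrite !mxE unlift_none mul1r /cofactor /= exprD -mulrA; congr (_ * (_ * _)).
congr (\det _); apply/matrixP => i j'; rewrite !mxE.
by rewrite liftK.
Qed.

End Wedge.
Section Fam.
Variables (R : realType) (M : Type) (N : nat) (Y : 'I_N -> set M).
Local Notation C := (R[i]).

Lemma indicT (A : set M) y : A y -> indic A y = 1 :> C.
Proof. by move=> h; rewrite /indic asboolT. Qed.
Lemma indicF (A : set M) y : ~ A y -> indic A y = 0 :> C.
Proof. by move=> h; rewrite /indic asboolF. Qed.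

Definition Cs (i : nat) : set M := [set y | forall j : 'I_N, (i <= j)%N -> Y j y].

Definition Aset1 (i : 'I_N.+1) : set M :=
  match unlift ord0 i with
  | None => \bigcap_(j in setT) Y j
  | Some k => ~` Y k `&` \bigcap_(j in [set j : 'I_N | (k < j)%N]) Y j
  end.

Definition fA : 'I_N.+1 -> M -> C := fun i => indic (Aset1 i).
Definition fC : 'I_N.+1 -> M -> C := fun i => indic (Cs i).

Lemma Cs_split (k : 'I_N) y : Cs k y <-> Y k y /\ Cs k.+1 y.
Proof.
split.
  by move=> h; split; [apply: h | move=> j hj; apply: h; apply: ltnW].
move=> [h1 h2] j; rewrite leq_eqVlt => /orP[/eqP e|hj]; last exact: h2.
by have -> : j = k by apply: val_inj.
Qed.

Lemma fC_step (k : 'I_N) y : indic (Cs k.+1) y = indic (Aset1 (lift ord0 k)) y + indic (Cs k) y :> C.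
Proof.
rewrite /Aset1 liftK.
have eA : (~` Y k `&` \bigcap_(j in [set j : 'I_N | (k < j)%N]) Y j) y <-> ~ Y k y /\ Cs k.+1 y.
  split; first by case=> h1 h2; split => // j hj; apply: h2.
  by case=> h1 h2; split => // j hj; apply: h2.
have [hc|hc] := pselect (Cs k.+1 y); last first.
  have e1 : indic (Cs k) y = 0 :> C by apply: indicF => /Cs_split [].
  have e2 : indic (~` Y k `&` \bigcap_(j in [set j : 'I_N | (k < j)%N]) Y j) y = 0 :> C.
    by apply: indicF => /eA [].
  by rewrite e1 e2 indicF // addr0.
have [hy|hy] := pselect (Y k y).
  have e1 : indic (Cs k) y = 1 :> C by apply: indicT; apply/Cs_split.
  have e2 : indic (~` Y k `&` \bigcap_(j in [set j : 'I_N | (k < j)%N]) Y j) y = 0 :> C.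
    by apply: indicF => /eA [].
  by rewrite e1 e2 indicT // add0r.
have e1 : indic (Cs k) y = 0 :> C by apply: indicF => /Cs_split [].
have e2 : indic (~` Y k `&` \bigcap_(j in [set j : 'I_N | (k < j)%N]) Y j) y = 1 :> C.
  by apply: indicT; apply/eA.
by rewrite e1 e2 indicT // addr0.
Qed.

End Fam.
Section Fam2.
Variables (R : realType) (M : Type) (N : nat) (Y : 'I_N -> set M).
Local Notation C := (R[i]).

Lemma step1 x : Wg (fA R Y) x = Wg (fC R Y) x.
Proof.
pose F (m : nat) := fun i : 'I_N.+1 => if (i <= m)%N then fC R Y i else fA R Y i.
suff h : forall m, (m <= N)%N -> Wg (fA R Y) x = Wg (F m) x.
  rewrite (h N) //; apply: Wg_ext => i j; by rewrite /F -ltnS ltn_ord.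
elim=> [_|m IH hm].
  apply: Wg_ext => i j; rewrite /F; case: ifP => // /[!leqn0] /eqP i0.
  have -> : i = ord0 by apply: val_inj.
  rewrite /fA /fC /Aset1 unlift_none; congr (indic _ _).
  rewrite predeqE => z; split; first by move=> h j0 _; apply: h.
  by move=> h j0 _; apply: h.
rewrite IH; last exact: ltnW.
pose k : 'I_N := Ordinal hm.
pose i0 : 'I_N.+1 := lift ord0 k.
pose i1 : 'I_N.+1 := inord m.
have vi0 : val i0 = m.+1 by rewrite /= /bump leq0n add1n.
have vi1 : val i1 = m by rewrite /i1 /= inordK // ltnS ltnW.
have ne : i0 != i1.
  by rewrite -val_eqE vi0 vi1 neq_ltn ltnSn orbT.
rewrite -(@Wg_addrow R M N.+1 (F m) i0 i1 1 x ne).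
apply: Wg_ext => i j; rewrite /rset /F.
case: eqP => [->|nei].
  rewrite vi0 ltnn leqnn vi1 leqnn mul1r.
  have e0 : Cs Y i0 = Cs Y k.+1 by congr Cs; exact: vi0.
  have e1 : Cs Y i1 = Cs Y k by congr Cs; exact: vi1.
  by rewrite /fC /fA e0 e1 (fC_step R Y k) addrC.
have : (i <= m.+1)%N = (i <= m)%N.
  rewrite leq_eqVlt ltnS; case: eqP => // e; case: nei; apply: val_inj; by rewrite vi0.
by move=> ->.
Qed.
End Fam2.
Section Trans.
Variables (R : realType) (M : Type) (N' : nat).
Local Notation N := N'.+1.
Variables (Y : 'I_N -> set M) (p : nat) (hp : (p.+1 < N)%N).
Local Notation C := (R[i]).

Let hp0 : (p < N)%N. Proof. exact: ltn_trans hp. Qed.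
Definition kp : 'I_N := Ordinal hp0.
Definition kp1 : 'I_N := Ordinal hp.
Definition Ys : 'I_N -> set M := fun j => Y (tperm kp kp1 j).

Lemma Cs_Ys (i : nat) : i != p.+1 -> Cs Ys i = Cs Y i.
Proof.
move=> hne; rewrite predeqE => y; split => h j hj.
- have [le|lt] := leqP i p.
  + rewrite -(tpermK kp kp1 j); apply: h.
    by case: tpermP => [_|_|_ _] //=; apply: (leq_trans le).
  + have lt2 : (p.+1 < i)%N by rewrite ltn_neqAle eq_sym hne lt.
    have e : tperm kp kp1 j = j.
      apply: tpermD; rewrite -val_eqE /= neq_ltn.
        by rewrite (leq_trans (ltnW lt2) hj).
      by rewrite (leq_trans lt2 hj).
    by rewrite -e; apply: h.
- have [le|lt] := leqP i p.
  + rewrite /Ys; apply: h.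
    by case: tpermP => [_|_|_ _] //=; apply: (leq_trans le).
  + have lt2 : (p.+1 < i)%N by rewrite ltn_neqAle eq_sym hne lt.
    have e : tperm kp kp1 j = j.
      apply: tpermD; rewrite -val_eqE /= neq_ltn.
        by rewrite (leq_trans (ltnW lt2) hj).
      by rewrite (leq_trans lt2 hj).
    by rewrite /Ys e; apply: h.
Qed.


Definition Dset : set M := [set y | ~ Y kp y /\ ~ Y kp1 y /\ Cs Y p.+2 y].

Lemma asb_iff (P Q : Prop) : (P <-> Q) -> `[< P >] = `[< Q >].
Proof. by move=> h; congr asbool; apply: propext. Qed.

Lemma asb_and (P Q : Prop) : `[< P /\ Q >] = `[< P >] && `[< Q >].
Proof. by apply/asboolP/andP => -[/asboolP ? /asboolP ?]; split => //; apply/asboolP. Qed.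

Lemma asb_not (P : Prop) : `[< ~ P >] = ~~ `[< P >].
Proof. by apply/asboolP/idP => [h|/negP h hP]; [apply/negP => /asboolP | apply: h; apply/asboolP]. Qed.

Lemma indic_id y :
  indic (Cs Y p.+1) y + indic (Cs Ys p.+1) y =
  (-1) * indic Dset y + 1 * (indic (Cs Y p) y + indic (Cs Y p.+2) y) :> C.
Proof.
have e1 : `[< Cs Y p.+1 y >] = `[< Y kp1 y >] && `[< Cs Y p.+2 y >].
  by rewrite -asb_and; apply: asb_iff; exact: (Cs_split Y kp1 y).
have e2 : `[< Cs Ys p.+1 y >] = `[< Y kp y >] && `[< Cs Y p.+2 y >].
  rewrite -asb_and; apply: asb_iff.
  rewrite (Cs_split Ys kp1 y) /Ys tpermR.
  by rewrite (Cs_Ys (i := kp1.+1)) // /= gtn_eqF.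
have e3 : `[< Cs Y p y >] = `[< Y kp y >] && (`[< Y kp1 y >] && `[< Cs Y p.+2 y >]).
  rewrite -!asb_and; apply: asb_iff.
  rewrite (Cs_split Y kp y); split; case=> h1 h2; split => //.
    exact/(Cs_split Y kp1 y).
  exact/(Cs_split Y kp1 y).
have e4 : `[< Dset y >] = ~~ `[< Y kp y >] && (~~ `[< Y kp1 y >] && `[< Cs Y p.+2 y >]).
  by rewrite /Dset /= !asb_and !asb_not.
rewrite /indic e1 e2 e3 e4.
case: `[< Y kp y >]; case: `[< Y kp1 y >]; case: `[< Cs Y p.+2 y >] => /=;
  rewrite ?mulr0 ?mulr1 ?mul1r ?addr0 ?add0r //.
by rewrite addNr.
Qed.


Definition ip1 : 'I_N.+1 := lift ord0 kp.
Definition ip : 'I_N.+1 := widen_ord (leqnSn N) kp.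
Definition ip2 : 'I_N.+1 := lift ord0 kp1.

Lemma step2 x : Wg (fC R Y) x + Wg (fC R Ys) x = - Wg (rset (fC R Y) ip1 (indic Dset)) x.
Proof.
have hYs : forall i, i != ip1 -> fC R Ys i = fC R Y i.
  move=> i hne; rewrite /fC (Cs_Ys (i := i)) //.
rewrite -[Wg (fC R Y) x]mul1r -[Wg (fC R Ys) x]mul1r.
rewrite -(@Wg_lin _ _ _ (rset (fC R Y) ip1 (fun y => fC R Y ip1 y + fC R Ys ip1 y))
   (fC R Y) (fC R Ys) ip1 1 1 x); last first.
- by move=> y; rewrite /rset eqxx !mul1r.
- by move=> i hne; rewrite /rset (negbTE hne) hYs.
rewrite (@Wg_lin _ _ _ _ (rset (fC R Y) ip1 (indic Dset))
   (rset (fC R Y) ip1 (fun y => indic (Cs Y p) y + indic (Cs Y p.+2) y)) ip1 (-1) 1 x); last first.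
- move=> y; rewrite /rset eqxx /fC.
  have -> : Cs Y ip1 = Cs Y p.+1 by [].
  have -> : Cs Ys ip1 = Cs Ys p.+1 by [].
  exact: indic_id.
- by move=> i hne; rewrite /rset (negbTE hne).
rewrite (@Wg_lin _ _ _ (rset (fC R Y) ip1 (fun y => indic (Cs Y p) y + indic (Cs Y p.+2) y)) (rset (fC R Y) ip1 (indic (Cs Y p)))
   (rset (fC R Y) ip1 (indic (Cs Y p.+2))) ip1 1 1 x); last first.
- by move=> y; rewrite /rset eqxx !mul1r.
- by move=> i hne; rewrite /rset (negbTE hne).
have ne1 : ip1 != ip by rewrite -val_eqE /= /bump leq0n add1n gtn_eqF.
have ne2 : ip1 != ip2 by rewrite -val_eqE /= /bump !leq0n !add1n ltn_eqF.
rewrite (@Wg_alt _ _ _ (rset (fC R Y) ip1 (indic (Cs Y p))) ip1 ip x ne1); last first.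
  by move=> j; rewrite /rset eqxx eq_sym (negbTE ne1).
rewrite (@Wg_alt _ _ _ (rset (fC R Y) ip1 (indic (Cs Y p.+2))) ip1 ip2 x ne2); last first.
  by move=> j; rewrite /rset eqxx eq_sym (negbTE ne2).
by rewrite !mulr0 !addr0 mulr0 addr0 mulN1r.
Qed.


Definition Kf : 'I_N.+1 -> M -> C := rset (fC R Y) ip1 (indic Dset).
Definition Hf (m : nat) : 'I_N.+1 -> M -> C :=
  fun i => if (p.+2 <= i)%N && (i < m)%N then (fun y => Kf i y - 1) else Kf i.

Lemma Kf_max y : Kf ord_max y = 1.
Proof.
rewrite /Kf /rset; case: eqP => [e|_].
  by move: (congr1 val e); rewrite /= /bump leq0n add1n => /eqP; rewrite gtn_eqF.
by rewrite /fC indicT // => j hj; move: (ltn_ord j); rewrite ltnNge hj.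
Qed.

Lemma step3 x : Wg Kf x = Wg (Hf N) x.
Proof.
suff h : forall t, (p.+2 + t <= N)%N -> Wg Kf x = Wg (Hf (p.+2 + t)) x.
  by move: (h (N - p.+2)%N); rewrite subnKC //; apply.
elim=> [_|t IH ht].
  apply: Wg_ext => i j; rewrite /Hf addn0.
  by case: (leqP p.+2 i) => //= h; rewrite ltnNge h.
rewrite IH; last by rewrite (leq_trans _ ht) // addnS.
rewrite addnS in ht *.
set m := (p.+2 + t)%N in ht *.
have vi0 : val (inord m : 'I_N.+1) = m by rewrite /= inordK // ltnS ltnW.
have hne : (inord m : 'I_N.+1) != ord_max.
  by rewrite -val_eqE vi0 /= ltn_eqF.
rewrite -(@Wg_addrow R M N.+1 (Hf m) (inord m) ord_max (-1) x hne).
apply: Wg_ext => i j; rewrite /rset /Hf.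
case: eqP => [->|nei].
  rewrite vi0 ltnn andbF /= ltnSn andbT.
  have -> : (N < m)%N = false by rewrite ltnNge ltnW.
  rewrite andbF /= Kf_max mulr1.
  by have -> : (p.+1 < m)%N by rewrite /m leq_addr.
have -> : (i < m.+1)%N = (i < m)%N.
  rewrite ltnS leq_eqVlt; case: eqP => [e|_] //=.
  by case: nei; apply: val_inj; rewrite vi0.
by [].
Qed.


Definition Gf : 'I_N -> M -> C := fun i => Hf N (lift ord_max i).
Definition etaT : ('I_N -> M) -> C := fun z => - (-1) ^+ N * Wg Gf z.

Lemma trans_id x : Wg (fA R Y) x + Wg (fA R Ys) x = cobound etaT x.
Proof.
rewrite !step1 step2 -/Kf step3.
have -> : Wg (Hf N) x =
    Wg (fun i => if unlift ord_max i is Some i' then Gf i' else (fun _ => 1)) x.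
  apply: Wg_ext => i j; case: unliftP => [i' ->|->] //.
  by rewrite /Hf /= ltnn andbF Kf_max.
rewrite Wg_last /cobound /etaT -mulNr mulr_sumr.
by apply: eq_bigr => i _; rewrite mulrCA.
Qed.


Definition Bs (i : 'I_N) : set M := if (i == p.+1 :> nat) then Dset else Cs Y i.
Definition sh (i : 'I_N) : C := if (p.+2 <= i)%N then 1 else 0.

Lemma Gf_form i y : Gf i y = indic (Bs i) y - sh i.
Proof.
rewrite /Gf /Hf /Kf /rset /Bs /sh /= /bump.
have -> : (N <= i)%N = false by rewrite leqNgt ltn_ord.
rewrite add0n ltn_ord andbT.
have e : (lift ord_max i == ip1) = (i == p.+1 :> nat).
  by rewrite -val_eqE /= /bump leqNgt ltn_ord add0n leq0n add1n.
case: (leqP p.+2 i) => h.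
  have -> : (lift ord_max i == ip1) = false.
    by rewrite e gtn_eqF.
  by rewrite gtn_eqF // /fC lift_max.
by rewrite e subr0; case: eqP => // _; rewrite /fC lift_max.
Qed.

Lemma etaT_vanish z : (exists i0, (forall j, Y i0 (z j)) \/ (forall j, ~ Y i0 (z j))) ->
  etaT z = 0.
Proof.
move=> hs; rewrite /etaT; apply/eqP; rewrite mulf_eq0; apply/orP; right; apply/eqP.
have -> : Wg Gf z = Wg (fun i y => indic (Bs i) y - sh i) z.
  by apply: Wg_ext => i j; rewrite Gf_form.
have indic_eq : forall (A B : set M) y, (A y <-> B y) -> indic A y = indic B y :> C.
  by move=> A B y h; rewrite /indic (asb_iff h).
have CsN : forall y, Cs Y N y by move=> y j hj; move: (ltn_ord j); rewrite ltnNge hj.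
move: hs => [i0 [hin|hout]]; last first.
  apply: (@Wg_zero _ _ _ _ ord0) => j.
  rewrite /Bs /sh /= indicF ?subr0 //.
  by move=> h; apply: (hout j); apply: h.
have [lt|ge] := ltnP i0 p.
  have h1 : (i0.+1 < N)%N by apply: leq_ltn_trans lt hp0.
  pose r1 : 'I_N := Ordinal h1.
  have hne : i0 != r1 by rewrite -val_eqE /= neq_ltn ltnSn.
  apply: (Wg_alt hne) => j.
  have f1 : (i0 == p.+1 :> nat) = false by rewrite ltn_eqF // (ltn_trans lt).
  have f2 : (i0.+1 == p.+1 :> nat) = false by rewrite eqSS ltn_eqF.
  have f3 : (p.+1 < i0)%N = false by rewrite ltnNge ltnW // (ltn_trans lt).
  have f4 : (p.+1 < i0.+1)%N = false by rewrite ltnS ltnNge ltnW.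
  rewrite /Bs /sh /= f1 f2 f3 f4.
  congr (_ - _); apply: indic_eq; rewrite (Cs_split Y i0); split => [[]|] //.
have [le1|gt1] := leqP i0 p.+1.
  apply: (@Wg_zero _ _ _ _ kp1) => j.
  rewrite /Bs /sh /= eqxx ltnn subr0; apply: indicF => -[h1 [h2 _]].
  move: le1; rewrite leq_eqVlt ltnS => /orP[/eqP e|le2].
    by apply: h2; have <- : i0 = kp1 by apply: val_inj. 
  by apply: h1; have <- : i0 = kp by apply: val_inj; apply/eqP; rewrite eqn_leq le2.
have f1 : (i0 == p.+1 :> nat) = false by rewrite gtn_eqF.
have f3 : (p.+1 < i0)%N by [].
have [h1|h1] := ltnP i0.+1 N.
  pose r1 : 'I_N := Ordinal h1.
  have hne : i0 != r1 by rewrite -val_eqE /= neq_ltn ltnSn.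
  apply: (Wg_alt hne) => j.
  have f2 : (i0.+1 == p.+1 :> nat) = false by rewrite eqSS gtn_eqF // ltnW.
  have f4 : (p.+1 < i0.+1)%N by rewrite ltnS ltnW.
  rewrite /Bs /sh /= f1 f2 f3 f4.
  congr (_ - _); apply: indic_eq; rewrite (Cs_split Y i0); split => [[]|] //.
apply: (@Wg_zero _ _ _ _ i0) => j.
rewrite /Bs /sh /= f1 f3 indicT ?subrr //.
apply/(Cs_split Y i0); split => // j' hj'; move: (ltn_ord j'); rewrite ltnNge.
by rewrite (leq_trans h1 hj').
Qed.


Lemma sB_ext (T : Type) (dT : T -> T -> R) (f g : T -> C) :
  (forall x, f x = g x) -> sB dT f -> sB dT g.
Proof.
move=> e [I [E [F [hE hf]]]]; exists I, E, F; split => // x; by rewrite -e.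
Qed.

Variable d : M -> M -> R.
Hypothesis hd : is_metric d.
Hypothesis hY : forall j, mborel d (Y j).

Lemma Cs_borel i : mborel d (Cs Y i).
Proof.
have -> : Cs Y i = [set y | forall j : 'I_N, j \in seq.filter (fun j : 'I_N => (i <= j)%N) (enum 'I_N) -> Y j y].
  rewrite predeqE => y; split => h j.
    by rewrite mem_filter => /andP[hj _]; apply: h.
  by move=> hj; apply: h; rewrite mem_filter hj mem_enum.
exact: mb_seqI.
Qed.

Lemma Dset_borel : mborel d Dset.
Proof.
have -> : Dset = ~` Y kp `&` (~` Y kp1 `&` Cs Y p.+2) by [].
apply: mbI; first exact: mbC.
apply: mbI; [exact: mbC | exact: Cs_borel].
Qed.

Lemma etaT_sB : sB (dmax d) etaT.
Proof.
have hE : forall l : 'I_N * 'I_N, mborel (dmax d) [set z : 'I_N -> M | Bs l.1 (z l.2)].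
  move=> l; apply: mb_proj => //; rewrite /Bs; case: ifP => _.
    exact: Dset_borel.
  exact: Cs_borel.
have := @sB_of R ('I_N -> M) (dmax d) ('I_N * 'I_N)%type _ (fun v => - (-1) ^+ N * \det (\matrix_(i, j) ((if v (i, j) then 1 else 0) - sh i))) hE.
apply: sB_ext => z; rewrite /etaT /Wg; congr (_ * _); congr (\det _).
by apply/matrixP => i j; rewrite !mxE Gf_form.
Qed.

End Trans.
Section Final.
Variables (R : realType) (M : Type) (d : M -> M -> R) (N' : nat).
Local Notation N := N'.+1.
Variable (X : 'I_N -> set M).
Hypothesis hd : is_metric d.
Hypothesis htr : coarsely_transverse d X.
Local Notation C := (R[i]).

Definition Wf (s : 'S_N) (x : 'I_N.+1 -> M) : C := Wg (fA R (fun j => X (s j))) x.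

Definition Pp (s : 'S_N) := exists eta : ('I_N -> M) -> C, Good d X eta /\
  forall x, cobound eta x = Wf s x - (-1) ^+ (odd_perm s) * Wf 1 x.

Definition Qq (t : 'S_N) := forall s, Pp s -> Pp (t * s)%g.

Lemma cobound_add (f g : ('I_N -> M) -> C) x :
  cobound (fun z => f z + g z) x = cobound f x + cobound g x.
Proof. by rewrite /cobound -big_split; apply: eq_bigr => i _; rewrite mulrDr. Qed.

Lemma cobound_scale c (f : ('I_N -> M) -> C) x :
  cobound (fun z => c * f z) x = c * cobound f x.
Proof. by rewrite /cobound mulr_sumr; apply: eq_bigr => i _; rewrite mulrCA. Qed.

Lemma Pp1 : Pp 1.
Proof.
exists (fun _ => 0); split; first exact: Good0.
move=> x; rewrite odd_perm1 expr0 mul1r subrr /cobound big1 // => i _.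
by rewrite mulr0.
Qed.

Lemma QqM a b : Qq a -> Qq b -> Qq (a * b)%g.
Proof. by move=> ha hb s /hb /ha; rewrite mulgA. Qed.

Lemma Qq1 : Qq 1.
Proof. by move=> s; rewrite mul1g. Qed.

Lemma Qq_adj p (hp : (p.+1 < N)%N) : Qq (tperm (kp hp) (kp1 hp)).
Proof.
move=> s [eta [Ge he]].
pose Y := fun j => X (s j).
exists (fun z => etaT R Y hp z + (-1) * eta z); split.
  apply: GoodD; last exact: GoodZ.
  split.
    by apply: etaT_sB => j; case: htr => h _; apply: h.
  move=> z [i hi]; apply: etaT_vanish; exists (s^-1 i)%g.
  by rewrite /Y permKV.
move=> x; rewrite cobound_add (cobound_scale (-1) eta) he -(trans_id R Y hp x).
have -> : Wf (tperm (kp hp) (kp1 hp) * s) x = Wg (fA R (Ys Y hp)) x.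
  rewrite /Wf /Ys /Y; congr (Wg (fA R _) x); apply: funext => j; by rewrite permM.
rewrite odd_mul_tperm.
have -> : (kp hp != kp1 hp) by rewrite -val_eqE /= neq_ltn ltnSn.
rewrite /Wf -/Y.
by case: (odd_perm s) => /=; rewrite ?expr1 ?expr0 ?mulN1r ?mul1r ?opprK; ring.
Qed.


Lemma Qq_adj' (a b : 'I_N) : val b = (val a).+1 -> Qq (tperm a b).
Proof.
move=> hb.
have hp : ((val a).+1 < N)%N by rewrite -hb ltn_ord.
have e1 : kp hp = a by apply: val_inj.
have e2 : kp1 hp = b by apply: val_inj; rewrite /= hb.
rewrite -e1 -e2; exact: Qq_adj.
Qed.

Lemma Qq_gen t : forall (a b : 'I_N), val b = (val a + t)%N -> Qq (tperm a b).
Proof.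
elim: t => [|t IH] a b hb.
  have -> : b = a by apply: val_inj; rewrite hb addn0.
  rewrite tperm1; exact: Qq1.
case: t IH hb => [|t] IH hb.
  by apply: Qq_adj'; rewrite hb addn1.
have hb' : (a + t.+1 < N)%N by apply: (leq_ltn_trans _ (ltn_ord b)); rewrite hb !addnS.
pose b' : 'I_N := Ordinal hb'.
have Q1 : Qq (tperm a b') by apply: IH.
have Q2 : Qq (tperm b' b) by apply: Qq_adj'; rewrite hb /= addnS.
have e : tperm a b = (tperm b' b * (tperm a b' * tperm b' b))%g.
  have := tpermJ a b' (tperm b' b).
  rewrite conjgE tpermV tpermL tpermD.
  - by move=> <-.
  - by rewrite -val_eqE /= gtn_eqF // addnS ltnS leq_addr.
  - by rewrite -val_eqE /= hb gtn_eqF // addnS ltnS leq_addr.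
rewrite e; apply: QqM => //; exact: QqM.
Qed.

Lemma Qq_all s : Qq s.
Proof.
have [ts -> _] := prod_tpermP s.
elim: ts => [|t ts IH]; first by rewrite big_nil; exact: Qq1.
rewrite big_cons; apply: QqM => //.
case: (ltngtP t.1 t.2) => h.
- apply: (@Qq_gen (t.2 - t.1)%N); by rewrite subnKC // ltnW.
- rewrite tpermC; apply: (@Qq_gen (t.1 - t.2)%N); by rewrite subnKC // ltnW.
- have -> : t.2 = t.1 by apply: val_inj.
  rewrite tperm1; exact: Qq1.
Qed.

Lemma Pp_all s : Pp s.
Proof. by have := Qq_all s Pp1; rewrite mulg1. Qed.

End Final.
Unset Implicit Arguments.
Theorem proposition5p7 (R : realType) (M : Type) (d : M -> M -> R) (n : nat)
  (X : 'I_n -> set M) (sigma : 'S_n) :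
  proper_metric d ->
  coarsely_transverse d X ->
  is_coboundary d
    (fun x => wedge (fun i => indic (Aset X sigma i)) x
              - (-1) ^+ (odd_perm sigma) * wedge (fun i => indic (Aset X 1%g i)) x).
Proof.
move=> [hd _].
case: n X sigma => [|N'] X sigma htr.
  apply: funext => x /=.
  have -> : sigma = 1%g by apply/permP => -[].
  by rewrite odd_perm1 expr0 mul1r subrr.
have [eta [Ge he]] := Pp_all htr sigma.
exists eta; first exact: (Good_CX hd htr Ge).
apply: funext => x; rewrite he /Wf !wedge_Wg.
by [].
Qed.
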